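(* Let $G_k=(V,E,k)$ be a simple digraph with positive edge labels $k\in\mathbb{R}^E_{>0}$ and one (weakly connected) component, with $V=\{1,\dots,m\}$. Let $T=\{1,\dots,t\}\subseteq V_s$ be (the vertex set of) a terminal strong component, and let $\hat q\in\mathbb{R}^{V_s}_{\ge0}$ satisfy $R_k\hat q=0$, $\operatorname{supp}\hat q=T$, and $\hat q_1\ge\cdots\ge\hat q_t>0$. Let $\beta=R_k1_{V_s}\in\mathbb{R}^V$. Then $\sum_{i'=1}^{i}\beta_{i'}\ge0$ for every $i\in T$; if $i<t$ and $\hat q_i>\hat q_{i+1}$, then $\sum_{i'=1}^{i}\beta_{i'}>0$; and $\sum_{i'=1}^{t}\beta_{i'}=0$ if and only if $T=V$.
   Context: $V_s\subseteq V$ is the set of vertices with at least one outgoing edge. The rectangular Laplacian $R_k\in\mathbb{R}^{V\times V_s}$ has entries $(R_k)_{i,j}=k_{j\to i}$ if $(j\to i)\in E$, $(R_k)_{j,j}=-\sum_{(j\to i')\in E}k_{j\to i'}$, and $0$ otherwise. $1_{V_s}$ is the all-ones vector. A terminal strong component is a strongly connected component with no edge leaving it. *)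

(* Defs.v *)
From HB Require Import structures.
From mathcomp Require Import all_boot all_order all_algebra.
Set Implicit Arguments. Unset Strict Implicit. Unset Printing Implicit Defensive.
Import Order.TTheory GRing.Theory Num.Theory.
Local Open Scope ring_scope.

(* A digraph on V = 'I_m is a relation E; E j i means the edge j -> i. *)

(* simple digraph: no self-loops (multi-edges are impossible for a relation) *)
Definition simple_digraph (m : nat) (E : rel 'I_m) : Prop := forall i, ~~ E i i.

Definition weakly_connected (m : nat) (E : rel 'I_m) : Prop :=
  forall x y, connect (fun a b => E a b || E b a) x y.

Definition Vs (m : nat) (E : rel 'I_m) : {set 'I_m} := [set j | [exists i, E j i]].

Definition strong_component (m : nat) (E : rel 'I_m) (S : {set 'I_m}) : Prop :=
  exists x, S = [set y | connect E x y && connect E y x].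

Definition terminal_strong_component (m : nat) (E : rel 'I_m) (S : {set 'I_m}) : Prop :=
  strong_component E S /\ (forall x y, x \in S -> E x y -> y \in S).

(* Entry (i, j) of the rectangular Laplacian R_k (only meaningful for j \in V_s);
   k j i is the label k_{j -> i}. *)
Definition Rk_entry (R : ringType) (m : nat) (E : rel 'I_m) (k : 'I_m -> 'I_m -> R)
    (i j : 'I_m) : R :=
  if E j i then k j i
  else if i == j then - \sum_(i' | E j i') k j i'
  else 0.

(* R_k applied to a vector q in R^{V_s} (q is given on all of V; only its
   values on V_s are used). *)
Definition Rk_app (R : ringType) (m : nat) (E : rel 'I_m) (k : 'I_m -> 'I_m -> R)
    (q : 'I_m -> R) (i : 'I_m) : R :=
  \sum_(j in Vs E) Rk_entry E k i j * q j.

Definition beta (R : ringType) (m : nat) (E : rel 'I_m) (k : 'I_m -> 'I_m -> R)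
    (i : 'I_m) : R :=
  Rk_app E k (fun _ => 1) i.

(* Main.v *)
Require Import Defs.
From mathcomp Require Import all_boot all_order all_algebra.
From mathcomp Require Import ring lra.
Set Implicit Arguments. Unset Strict Implicit. Unset Printing Implicit Defensive.
Import Order.TTheory GRing.Theory Num.Theory.
Local Open Scope ring_scope.

Section H.
Variables (R : realFieldType) (m : nat) (E : rel 'I_m) (k : 'I_m -> 'I_m -> R).

Definition ee a b : R := if E a b then k a b else 0.

Definition inflow (P : pred 'I_m) (w : 'I_m -> R) :=
  \sum_(a | ~~ P a) \sum_(b | P b) ee a b * w a.
Definition outflow (P : pred 'I_m) (w : 'I_m -> R) :=
  \sum_(a | P a) \sum_(b | ~~ P b) ee a b * w a.

Lemma Rk_appE w i : simple_digraph E ->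
  Rk_app E k w i = \sum_j ee j i * w j - w i * \sum_b ee i b.
Proof.
move=> Hs.
have He : forall j, \sum_(i' | E j i') k j i' = \sum_b ee j b.
  by move=> j; rewrite big_mkcond.
rewrite /Rk_app big_mkcond /=.
rewrite (eq_bigr (fun j => ee j i * w j - (if i == j then (\sum_b ee j b) * w j else 0))); last first.
  move=> j _; case: (boolP (j \in Vs E)) => Hj.
    rewrite /Rk_entry /ee He /ee; case: ifP => Eji.
      have -> : (i == j) = false.
        by apply/negbTE/eqP => ij; move: (Hs i); rewrite {1}ij Eji.
      by rewrite subr0.
    by case: eqP => _; ring.
  have noE : forall b, E j b = false.
    by move=> b; apply/negbTE/negP => Ejb; move: Hj; rewrite inE; case/existsP; exists b.
  rewrite /ee noE mul0r sub0r.
  have -> : \sum_b (if E j b then k j b else 0) = 0 by apply: big1 => b _; rewrite noE.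
  by case: (i == j); rewrite ?mul0r ?oppr0.
rewrite sumrB [X in _ - X](bigD1 i) //= eqxx [X in _ * _ + X]big1; last first.
  by move=> j; rewrite eq_sym => /negbTE ->.
by rewrite addr0 mulrC.
Qed.

Lemma flow (P : pred 'I_m) w : simple_digraph E ->
  \sum_(i | P i) Rk_app E k w i = inflow P w - outflow P w.
Proof.
move=> Hs.
rewrite (eq_bigr _ (fun i _ => Rk_appE w i Hs)) sumrB.
have -> : \sum_(i | P i) \sum_j ee j i * w j =
   \sum_(j | P j) \sum_(i | P i) ee j i * w j + inflow P w.
  by rewrite exchange_big (bigID P).
have -> : \sum_(i | P i) w i * \sum_b ee i b =
   \sum_(j | P j) \sum_(i | P i) ee j i * w j + outflow P w.
  rewrite /outflow -big_split /=; apply: eq_bigr => i _.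
  rewrite mulr_sumr (bigID P) /=; congr (_ + _); apply: eq_bigr => b _; by rewrite mulrC.
ring.
Qed.

Lemma cross (T : finType) (r : rel T) (P : pred T) x y :
  connect r x y -> ~~ P x -> P y -> exists a b, [/\ ~~ P a, P b & r a b].
Proof.
move=> /connectP [p]; elim: p x => [|z p IH] x /=.
  by move=> _ -> Hx Hy; rewrite Hy in Hx.
move=> /andP [rxz pz] ey Px Py.
case Pz: (P z); first by exists x, z.
by apply: IH pz ey _ Py; rewrite Pz.
Qed.

Hypothesis Hk : forall j i, E j i -> 0 < k j i.

Lemma ee_ge0 a b : 0 <= ee a b.
Proof. by rewrite /ee; case: ifP => // /Hk /ltW. Qed.

Lemma inflow_le (P : pred 'I_m) (w : 'I_m -> R) c :
  (forall a b, ~~ P a -> P b -> E a b -> w a <= c) -> inflow P w <= c * inflow P (fun _ => 1).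
Proof.
move=> H; rewrite /inflow mulr_sumr; apply: ler_sum => a Pa.
rewrite mulr_sumr; apply: ler_sum => b Pb; rewrite mulr1 (mulrC c).
case Eab: (E a b); last by rewrite /ee Eab; lra.
apply: ler_wpM2l. exact: ee_ge0. exact: (H a b Pa Pb Eab).
Qed.

Lemma outflow_ge (P : pred 'I_m) (w : 'I_m -> R) c :
  (forall a b, P a -> ~~ P b -> E a b -> c <= w a) -> c * outflow P (fun _ => 1) <= outflow P w.
Proof.
move=> H; rewrite /outflow mulr_sumr; apply: ler_sum => a Pa.
rewrite mulr_sumr; apply: ler_sum => b Pb; rewrite mulr1 (mulrC c).
case Eab: (E a b); last by rewrite /ee Eab; lra.
apply: ler_wpM2l. exact: ee_ge0. exact: (H a b Pa Pb Eab).
Qed.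

Lemma inflow1_gt0 P a b : ~~ P a -> P b -> E a b -> 0 < inflow P (fun _ => 1).
Proof.
move=> Pa Pb Eab; rewrite /inflow (bigD1 a) //= (bigD1 b) //=.
have h1 : 0 < ee a b * 1 by rewrite mulr1 /ee Eab Hk.
have h2 : 0 <= \sum_(i | P i && (i != b)) ee a i * 1.
  by apply: sumr_ge0 => i _; rewrite mulr1 ee_ge0.
have h3 : 0 <= \sum_(i | ~~ P i && (i != a)) \sum_(b0 | P b0) ee i b0 * 1.
  by apply: sumr_ge0 => i _; apply: sumr_ge0 => j _; rewrite mulr1 ee_ge0.
lra.
Qed.

End H.

Theorem lemma14 (R : realFieldType) (m t : nat) (E : rel 'I_m)
  (k : 'I_m -> 'I_m -> R) (q : 'I_m -> R) :
  simple_digraph E ->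
  (forall j i, E j i -> 0 < k j i) ->
  weakly_connected E ->
  (0 < t)%N -> (t <= m)%N ->
  [set i : 'I_m | (i < t)%N] \subset Vs E ->
  terminal_strong_component E [set i : 'I_m | (i < t)%N] ->
  (forall j, j \in Vs E -> 0 <= q j) ->
  (forall i, Rk_app E k q i = 0) ->
  (forall j, j \in Vs E -> (q j != 0) = (j < t)%N) ->
  (forall i j : 'I_m, (i <= j)%N -> (j < t)%N -> q j <= q i) ->
  (forall i : 'I_m, (i < t)%N -> 0 < q i) ->
  [/\ (forall i : 'I_m, (i < t)%N -> 0 <= \sum_(i' < m | (i' <= i)%N) beta E k i'),
      (forall i j : 'I_m, nat_of_ord j = i.+1 -> (j < t)%N -> q j < q i ->
          0 < \sum_(i' < m | (i' <= i)%N) beta E k i')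
    & ((\sum_(i' < m | (i' < t)%N) beta E k i' == 0) <-> t = m)].

Proof.
move=> Hs Hk Hwc t0 tm TVs [[x0 Tdef] Tterm] qge0 Rq qsupp qmono qpos.
have inVs : forall a b, E a b -> a \in Vs E.
  by move=> a b Eab; rewrite inE; apply/existsP; exists b.
have q0 : forall a, a \in Vs E -> ~~ (a < t)%N -> q a = 0.
  by move=> a Ha Hat; apply/eqP; apply/negPn; rewrite qsupp // (negbTE Hat).
have sumB : forall P : pred 'I_m, \sum_(i' | P i') beta E k i' =
    inflow E k P (fun _ => 1) - outflow E k P (fun _ => 1).
  by move=> P; rewrite /beta (@flow _ _ _ k P _ Hs).
have sumQ : forall P : pred 'I_m, inflow E k P q = outflow E k P q.
  by move=> P; apply/eqP; rewrite -subr_eq0 -(@flow _ _ _ k P _ Hs) big1.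
have Bge : forall i : 'I_m, (i < t)%N ->
    q i * outflow E k (fun a : 'I_m => (a <= i)%N) (fun _ => 1)
    <= outflow E k (fun a : 'I_m => (a <= i)%N) q.
  move=> i it; apply: outflow_ge => // a b Pa _ _.
  by apply: qmono => //; apply: leq_ltn_trans it.
have inT : forall a : 'I_m, (a < t)%N -> connect E a x0 && connect E x0 a.
  move=> a at'; have : a \in [set i : 'I_m | (i < t)%N] by rewrite inE.
  by rewrite Tdef inE andbC.
split.
- move=> i it; rewrite (sumB (fun a : 'I_m => (a <= i)%N)) subr_ge0.
  have Ale : inflow E k (fun a : 'I_m => (a <= i)%N) q <=
      q i * inflow E k (fun a : 'I_m => (a <= i)%N) (fun _ => 1).
    apply: inflow_le => // a b Pa _ Eab.
    case at': (a < t)%N; first by apply: qmono; [apply: ltnW; rewrite ltnNge | rewrite at'].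
    by rewrite q0 ?at' ?(inVs a b) //; apply: ltW; apply: qpos.
  rewrite -(ler_pM2l (qpos i it)).
  by apply: le_trans (Bge i it) _; rewrite -sumQ.
- move=> i j ji jt qji.
  have it : (i < t)%N by apply: leq_ltn_trans jt; rewrite ji.
  rewrite (sumB (fun a : 'I_m => (a <= i)%N)) subr_gt0.
  have Ale : inflow E k (fun a : 'I_m => (a <= i)%N) q <=
      q j * inflow E k (fun a : 'I_m => (a <= i)%N) (fun _ => 1).
    apply: inflow_le => // a b Pa _ Eab.
    case at': (a < t)%N; first by apply: qmono; [rewrite ji ltnNge | rewrite at'].
    by rewrite q0 ?at' ?(inVs a b) //; apply: ltW; apply: qpos.
  have Apos : 0 < inflow E k (fun a : 'I_m => (a <= i)%N) (fun _ => 1).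
    have cji : connect E j i.
      move: (inT j jt) (inT i it) => /andP [jx _] /andP [_ xi].
      exact: connect_trans jx xi.
    have nj : ~~ (j <= i)%N by rewrite ji ltnn.
    have [a [b [Pa Pb Eab]]] := cross (P := fun a : 'I_m => (a <= i)%N) cji nj (leqnn i).
    exact: inflow1_gt0 Pa Pb Eab.
  rewrite -(ltr_pM2l (qpos i it)).
  apply: le_lt_trans (Bge i it) _; rewrite -sumQ.
  apply: le_lt_trans Ale _.
  by rewrite ltr_pM2r.
- rewrite (sumB (fun a : 'I_m => (a < t)%N)).
  have B0 : outflow E k (fun a : 'I_m => (a < t)%N) (fun _ => 1) = 0.
    apply: big1 => a Pa; apply: big1 => b Pb.
    case Eab: (E a b); last by rewrite /ee Eab mul0r.
    have := Tterm a b; rewrite !inE => /(_ Pa Eab) bt.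
    by rewrite bt in Pb.
  rewrite B0 subr0; split.
  + move=> /eqP A0; apply/eqP; rewrite eqn_leq tm /=; rewrite leqNgt; apply/negP => tlt.
    have cc := Hwc (Ordinal tlt) (Ordinal (leq_trans t0 tm)).
    have nt : ~~ (Ordinal tlt < t)%N by rewrite /= ltnn.
    have [a [b [Pa Pb Eab]]] := cross (P := fun a : 'I_m => (a < t)%N) cc nt t0.
    case/orP: Eab => Eab.
      by have := @inflow1_gt0 _ _ _ k Hk (fun a : 'I_m => (a < t)%N) _ _ Pa Pb Eab; rewrite A0 ltxx.
    have := Tterm b a; rewrite !inE => /(_ Pb Eab) at'.
    by rewrite at' in Pa.
  + move=> tm'; subst t; apply/eqP; apply: big1 => a.
    by rewrite ltn_ord.
Qed.
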